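(* Let $n\ge2$. Every sublinear generalized frame function $f:\mathbb{C}^n\to\mathbb{R}$ is identically zero.
   Context: $\mathbb{C}^n$ carries a Hermitian inner product. A generalized frame function is $f:\mathbb{C}^n\to\mathbb{R}$ with $f(0)=0$ and $f(u+v)=f(u)+f(v)$ for every pair of orthogonal vectors $u,v\in\mathbb{C}^n\setminus\{0\}$. $f$ is sublinear if $f(v)/\|v\|\to0$ as $\|v\|\to\infty$. *)

(* Defs.v *)
From Stdlib Require Import Reals Lra.
Open Scope R_scope.

(* Complex numbers as pairs (real part, imaginary part). *)
Definition C := (R * R)%type.
Definition C0 : C := (0, 0).
Definition Cadd (a b : C) : C := (fst a + fst b, snd a + snd b).

(* C^n: sequences of complex numbers vanishing from index n on
   (coordinates 0 .. n-1). *)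
Definition Cvec (n : nat) : Type :=
  { v : nat -> C | forall i, (n <= i)%nat -> v i = C0 }.

Definition coord {n : nat} (v : Cvec n) (i : nat) : C := proj1_sig v i.

Lemma zero_vec_prop (n : nat) : forall i, (n <= i)%nat -> (fun _ : nat => C0) i = C0.
Proof. reflexivity. Qed.

Definition vzero (n : nat) : Cvec n := exist _ (fun _ => C0) (zero_vec_prop n).

Lemma vadd_prop (n : nat) (u v : Cvec n) :
  forall i, (n <= i)%nat -> Cadd (coord u i) (coord v i) = C0.
Proof.
  intros i Hi. unfold coord. destruct u as [u Hu], v as [v Hv]; simpl.
  rewrite (Hu i Hi), (Hv i Hi). unfold Cadd, C0; simpl. f_equal; ring.
Qed.

Definition vadd {n : nat} (u v : Cvec n) : Cvec n :=
  exist _ (fun i => Cadd (coord u i) (coord v i)) (vadd_prop n u v).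

Fixpoint rsum (k : nat) (g : nat -> R) : R :=
  match k with
  | O => 0
  | S k' => rsum k' g + g k'
  end.

(* Hermitian inner product <u,v> = sum_i u_i * conj(v_i), split into real and
   imaginary parts. *)
Definition inner_re {n : nat} (u v : Cvec n) : R :=
  rsum n (fun i => fst (coord u i) * fst (coord v i) + snd (coord u i) * snd (coord v i)).
Definition inner_im {n : nat} (u v : Cvec n) : R :=
  rsum n (fun i => snd (coord u i) * fst (coord v i) - fst (coord u i) * snd (coord v i)).

Definition orthogonal {n : nat} (u v : Cvec n) : Prop :=
  inner_re u v = 0 /\ inner_im u v = 0.

Definition vnorm {n : nat} (v : Cvec n) : R := sqrt (inner_re v v).

Definition gen_frame_function {n : nat} (f : Cvec n -> R) : Prop :=
  f (vzero n) = 0 /\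
  forall u v : Cvec n, u <> vzero n -> v <> vzero n -> orthogonal u v ->
    f (vadd u v) = f u + f v.

Definition sublinear {n : nat} (f : Cvec n -> R) : Prop :=
  forall eps : R, eps > 0 -> exists M : R, forall v : Cvec n,
    vnorm v > M -> Rabs (f v / vnorm v) < eps.

(* Main.v *)
Require Import Defs.
From Stdlib Require Import Reals Lra Lia FunctionalExtensionality ProofIrrelevance Classical.
Open Scope R_scope.

Lemma vec_eq {n} (u v : Cvec n) : (forall i, coord u i = coord v i) -> u = v.
Proof.
  destruct u as [u Hu], v as [v Hv]; unfold coord; simpl; intros H.
  assert (u = v) by (apply functional_extensionality; auto). subst.
  f_equal; apply proof_irrelevance.
Qed.

Lemma pair_eq (a b : Defs.C) : fst a = fst b -> snd a = snd b -> a = b.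
Proof. destruct a, b; simpl; intros; subst; auto. Qed.

Lemma vscale_prop n t (u : Cvec n) : forall i, (n <= i)%nat ->
  (t * fst (coord u i), t * snd (coord u i)) = C0.
Proof.
  intros i Hi; destruct u as [u Hu]; unfold coord; simpl; rewrite (Hu i Hi).
  unfold C0; simpl; f_equal; ring.
Qed.

Definition vscale {n} (t : R) (u : Cvec n) : Cvec n :=
  exist _ (fun i => (t * fst (coord u i), t * snd (coord u i))) (vscale_prop n t u).

Lemma rsum_ext k g h : (forall i, (i < k)%nat -> g i = h i) -> rsum k g = rsum k h.
Proof. induction k; simpl; intros H; auto. rewrite IHk, H; auto. Qed.
Lemma rsum_add k g h : rsum k (fun i => g i + h i) = rsum k g + rsum k h.
Proof. induction k; simpl. ring. rewrite IHk; ring. Qed.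
Lemma rsum_scal k c g : rsum k (fun i => c * g i) = c * rsum k g.
Proof. induction k; simpl. ring. rewrite IHk; ring. Qed.
Lemma rsum_zero k : rsum k (fun _ => 0) = 0.
Proof. induction k; simpl; auto. rewrite IHk; ring. Qed.
Lemma rsum_nonneg k g : (forall i, 0 <= g i) -> 0 <= rsum k g.
Proof. induction k; simpl; intros H. lra. specialize (IHk H); specialize (H k); lra. Qed.
Lemma rsum_nonneg_zero k g : (forall i, 0 <= g i) -> rsum k g = 0 ->
  forall i, (i < k)%nat -> g i = 0.
Proof.
  induction k; simpl; intros H E i Hi. lia.
  pose proof (rsum_nonneg k g H). pose proof (H k).
  assert (g k = 0) by lra. assert (rsum k g = 0) by lra.
  destruct (Nat.eq_dec i k). subst; auto. apply IHk; auto; lia.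
Qed.
Lemma rsum_two n g : (2 <= n)%nat -> (forall i, (2 <= i)%nat -> g i = 0) ->
  rsum n g = g 0%nat + g 1%nat.
Proof.
  intros Hn H. induction n. lia.
  destruct (Nat.eq_dec n 1). subst. simpl. ring.
  simpl. rewrite IHn by lia. rewrite (H n) by lia. ring.
Qed.

Notation N u := (inner_re u u).

Ltac lin := unfold inner_re, inner_im;
  repeat (rewrite <- rsum_add || rewrite <- rsum_scal); apply rsum_ext; intros; simpl; ring.

Lemma re_addl {n} (u v w : Cvec n) : inner_re (vadd u v) w = inner_re u w + inner_re v w.
Proof. lin. Qed.
Lemma re_addr {n} (u v w : Cvec n) : inner_re w (vadd u v) = inner_re w u + inner_re w v.
Proof. lin. Qed.
Lemma im_addl {n} (u v w : Cvec n) : inner_im (vadd u v) w = inner_im u w + inner_im v w.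
Proof. lin. Qed.
Lemma im_addr {n} (u v w : Cvec n) : inner_im w (vadd u v) = inner_im w u + inner_im w v.
Proof. lin. Qed.
Lemma re_scl {n} t (u w : Cvec n) : inner_re (vscale t u) w = t * inner_re u w.
Proof. lin. Qed.
Lemma re_scr {n} t (u w : Cvec n) : inner_re w (vscale t u) = t * inner_re w u.
Proof. lin. Qed.
Lemma im_scl {n} t (u w : Cvec n) : inner_im (vscale t u) w = t * inner_im u w.
Proof. lin. Qed.
Lemma im_scr {n} t (u w : Cvec n) : inner_im w (vscale t u) = t * inner_im w u.
Proof. lin. Qed.
Lemma im_self {n} (u : Cvec n) : inner_im u u = 0.
Proof. unfold inner_im. rewrite <- (rsum_zero n). apply rsum_ext; intros; ring. Qed.
Lemma re_sym {n} (u v : Cvec n) : inner_re v u = inner_re u v.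
Proof. lin. Qed.
Lemma im_sym {n} (u v : Cvec n) : inner_im v u = - inner_im u v.
Proof. unfold inner_im. replace (- _) with ((-1) * rsum n (fun i => snd (coord u i) * fst (coord v i) - fst (coord u i) * snd (coord v i))) by ring. rewrite <- (rsum_scal n (-1)). apply rsum_ext; intros; ring. Qed.

Lemma N_nonneg {n} (u : Cvec n) : 0 <= N u.
Proof. apply rsum_nonneg; intros; nra. Qed.
Lemma N_zero {n} (u : Cvec n) : N u = 0 -> u = vzero n.
Proof.
  intros H. apply vec_eq; intros i. unfold vzero, coord at 2; simpl.
  destruct (Compare_dec.le_lt_dec n i) as [Hi|Hi].
  - destruct u as [u Hu]; unfold coord; simpl; auto.
  - pose proof (rsum_nonneg_zero n _ (fun i => ltac:(apply Rplus_le_le_0_compat; apply Rle_0_sqr)) H i Hi) as E; simpl in E.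
    unfold C0; apply pair_eq; simpl; pose proof (Rle_0_sqr (fst (coord u i))); pose proof (Rle_0_sqr (snd (coord u i))); unfold Rsqr in *; nra.
Qed.
Lemma N_vzero n : N (vzero n) = 0.
Proof. unfold inner_re. rewrite <- (rsum_zero n). apply rsum_ext; intros; simpl; ring. Qed.
Lemma pos_nz {n} (u : Cvec n) : 0 < N u -> u <> vzero n.
Proof. intros H E; subst; rewrite N_vzero in H; lra. Qed.

Lemma scale_scale {n} a b (u : Cvec n) : vscale a (vscale b u) = vscale (a*b) u.
Proof. apply vec_eq; intros; apply pair_eq; simpl; ring. Qed.
Lemma scale_1 {n} (u : Cvec n) : vscale 1 u = u.
Proof. apply vec_eq; intros; apply pair_eq; simpl; ring. Qed.
Lemma scale_vzero {n} t : vscale t (vzero n) = vzero n.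
Proof. apply vec_eq; intros; apply pair_eq; simpl; ring. Qed.
Lemma split2 {n} (u v : Cvec n) : vadd (vadd u v) (vadd u (vscale (-1) v)) = vscale 2 u.
Proof. apply vec_eq; intros; apply pair_eq; simpl; ring. Qed.
Definition P {n} (u v : Cvec n) := 0 < N u /\ N v = N u /\ orthogonal u v /\ orthogonal v u.

Lemma P_sym {n} (u v : Cvec n) : P u v -> P v u.
Proof. intros (H1&H2&H3&H4); repeat split; try lra; apply H3 || apply H4. Qed.

Lemma P_scale {n} (u v : Cvec n) t : t <> 0 -> P u v -> P (vscale t u) (vscale t v).
Proof.
  intros Ht (H1&H2&[H3 H3']&[H4 H4']); unfold P, orthogonal.
  rewrite !re_scl, !re_scr, !im_scl, !im_scr, H2, H3, H3', H4, H4'.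
  repeat split; try ring. assert (0 < t*t) by nra. nra.
Qed.

Lemma E1 {n} (f : Cvec n -> R) (u v : Cvec n) : gen_frame_function f -> P u v ->
  f (vscale 2 u) = 2 * f u + f v + f (vscale (-1) v).
Proof.
  intros [_ Hf] (H1&H2&[H3 H3']&[H4 H4']).
  rewrite <- (split2 u v).
  assert (Nv : 0 < N (vscale (-1) v)) by (rewrite re_scl, re_scr; lra).
  rewrite Hf.
  - rewrite !Hf; try (apply pos_nz; lra); try (split; assumption).
    ring. split; rewrite ?re_scr, ?im_scr; [rewrite H3|rewrite H3']; ring.
  - apply pos_nz; rewrite re_addl, !re_addr; lra.
  - apply pos_nz; rewrite re_addl, !re_addr, !re_scl, !re_scr; lra.
  - split.
    + rewrite !re_addl, !re_addr, !re_scr, H3. rewrite (re_sym u v), H3. lra.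
    + rewrite !im_addl, !im_addr, !im_scr, H3', H4', !im_self; ring.
Qed.

Definition wvec_f {n} (u : Cvec n) (i : nat) : Defs.C :=
  match i with
  | O => (- fst (coord u 1), snd (coord u 1))
  | S O => (fst (coord u 0), - snd (coord u 0))
  | _ => C0 end.
Lemma wvec_prop n (Hn : (2 <= n)%nat) (u : Cvec n) : forall i, (n <= i)%nat -> wvec_f u i = C0.
Proof. intros [|[|i]] Hi; simpl; auto; lia. Qed.
Definition wvec n Hn (u : Cvec n) : Cvec n := exist _ (wvec_f u) (wvec_prop n Hn u).

Definition e0_f (i : nat) : Defs.C := match i with O => (1, 0) | _ => C0 end.
Lemma e0_prop n (Hn : (2 <= n)%nat) : forall i, (n <= i)%nat -> e0_f i = C0.
Proof. intros [|i] Hi; simpl; auto; lia. Qed.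
Definition e0 n Hn : Cvec n := exist _ e0_f (e0_prop n Hn).

Lemma orth_exists n (Hn : (2 <= n)%nat) (u : Cvec n) : exists w, 0 < N w /\ orthogonal u w.
Proof.
  set (a0 := fst (coord u 0)). set (b0 := snd (coord u 0)).
  set (a1 := fst (coord u 1)). set (b1 := snd (coord u 1)).
  destruct (Req_dec (a0*a0+b0*b0+a1*a1+b1*b1) 0) as [Z|Z].
  - assert (a0 = 0 /\ b0 = 0) as [A B] by nra.
    exists (e0 n Hn). unfold orthogonal, inner_re, inner_im.
    rewrite !(rsum_two n) by (auto; intros [|[|i]] Hi; try lia; unfold coord; simpl; ring).
    unfold coord at 2 4 6 8; simpl. fold a0 b0. rewrite A, B.
    repeat split; ring_simplify; lra.
  - exists (wvec n Hn u). unfold orthogonal, inner_re, inner_im.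
    rewrite !(rsum_two n) by (auto; intros [|[|i]] Hi; try lia; unfold coord; simpl; ring).
    unfold coord at 2 4 6 8; simpl. fold a0 b0 a1 b1.
    repeat split; try ring.
    assert (0 <= a0*a0+b0*b0+a1*a1+b1*b1) by nra. nra.
Qed.

Lemma partner n (Hn : (2 <= n)%nat) (u : Cvec n) : 0 < N u -> exists v, P u v.
Proof.
  intros Hu. destruct (orth_exists n Hn u) as (w & Hw & [O1 O2]).
  set (c := sqrt (N u / N w)).
  assert (Hc : c * c = N u / N w) by (apply sqrt_sqrt; apply Rlt_le; apply Rdiv_lt_0_compat; lra).
  exists (vscale c w). unfold P, orthogonal.
  rewrite !re_scl, !re_scr, !im_scl, !im_scr, (re_sym u w), (im_sym u w), O1, O2.
  repeat split; try lra.
  rewrite <- Rmult_assoc, Hc. field. lra.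
Qed.
Lemma vnorm_scale {n} t (u : Cvec n) : vnorm (vscale t u) = Rabs t * vnorm u.
Proof.
  unfold vnorm. rewrite re_scl, re_scr, <- Rmult_assoc.
  rewrite sqrt_mult by (try apply N_nonneg; nra).
  rewrite <- sqrt_Rsqr_abs; reflexivity.
Qed.

Lemma pow2_big x : exists k, x < 2 ^ k.
Proof.
  destruct (INR_archimed 1 x) as [m Hm]; try lra.
  exists m. assert (forall k, INR k <= 2 ^ k).
  { induction k. simpl; lra. rewrite S_INR; simpl.
    assert (1 <= 2^k) by (apply pow_R1_Rle; lra). lra. }
  specialize (H m); lra.
Qed.

Lemma small_f {n} (f : Cvec n -> R) eps M (w : Cvec n) :
  (forall v : Cvec n, vnorm v > M -> Rabs (f v / vnorm v) < eps) ->
  vnorm w > M -> 0 < vnorm w -> Rabs (f w) < eps * vnorm w.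
Proof.
  intros H Hw Hp. specialize (H w Hw).
  replace (f w) with ((f w / vnorm w) * vnorm w) by (field; lra).
  rewrite Rabs_mult, (Rabs_pos_eq (vnorm w)) by lra.
  apply Rmult_lt_compat_r; auto.
Qed.

Lemma growth {n} (f : Cvec n -> R) (u : Cvec n) c : sublinear f -> 0 < N u -> 0 < c ->
  (forall k, 2^k*c <= Rabs (f (vscale (2^k) u)) + Rabs (f (vscale (-(2^k)) u))) -> False.
Proof.
  intros Hs Hu Hc Hk.
  assert (Hn : 0 < vnorm u) by (apply sqrt_lt_R0; auto).
  destruct (Hs (c / (4 * vnorm u))) as [M HM].
  { apply Rlt_gt, Rdiv_lt_0_compat; lra. }
  destruct (pow2_big (M / vnorm u)) as [k Hk2].
  assert (Hp : 0 < 2^k) by (apply pow_lt; lra).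
  assert (E1 : vnorm (vscale (2^k) u) = 2^k * vnorm u)
    by (rewrite vnorm_scale, Rabs_pos_eq; lra).
  assert (E2 : vnorm (vscale (-(2^k)) u) = 2^k * vnorm u)
    by (rewrite vnorm_scale, Rabs_Ropp, Rabs_pos_eq; lra).
  assert (Big : 2^k * vnorm u > M).
  { apply (Rmult_lt_compat_r (vnorm u)) in Hk2; auto.
    unfold Rdiv in Hk2. rewrite Rmult_assoc, Rinv_l, Rmult_1_r in Hk2; lra. }
  assert (A1 := small_f f _ M (vscale (2^k) u) HM).
  assert (A2 := small_f f _ M (vscale (-(2^k)) u) HM).
  rewrite E1 in A1; rewrite E2 in A2.
  specialize (A1 Big ltac:(nra)); specialize (A2 Big ltac:(nra)).
  specialize (Hk k).
  replace (c / (4 * vnorm u) * (2 ^ k * vnorm u)) with (2^k * c / 4) in A1, A2 by (field; lra).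
  assert (0 < 2^k * c) by nra. lra.
Qed.

Lemma f_even n (Hn : (2 <= n)%nat) (f : Cvec n -> R) : gen_frame_function f -> sublinear f ->
  forall u, f (vscale (-1) u) = f u.
Proof.
  intros Hf Hs u.
  destruct (Req_dec (N u) 0) as [Z|Z].
  { apply N_zero in Z; subst; rewrite scale_vzero; auto. }
  assert (Hu : 0 < N u) by (pose proof (N_nonneg u); lra).
  destruct (partner n Hn u Hu) as [v Hv].
  set (h := fun t => f (vscale t u) - f (vscale (-t) u)).
  assert (Hd : forall t, t <> 0 -> h (2*t) = 2 * h t).
  { intros t Ht. unfold h.
    pose proof (E1 f _ _ Hf (P_scale u v t Ht Hv)) as A.
    pose proof (E1 f _ _ Hf (P_scale u v (-t) ltac:(lra) Hv)) as B.
    rewrite !scale_scale in A, B.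
    replace (-1 * t) with (-t) in A by ring.
    replace (2 * - t) with (- (2*t)) in B by ring.
    replace (-1 * - t) with t in B by ring.
    lra. }
  assert (Hk : forall k, h (2^k) = 2^k * h 1).
  { induction k. simpl; ring. simpl. rewrite Hd, IHk. ring.
    pose proof (pow_lt 2 k); lra. }
  destruct (Req_dec (h 1) 0) as [H0|H0].
  { unfold h in H0. rewrite scale_1 in H0. replace (- (1)) with (-1) in H0 by ring. lra. }
  exfalso. apply (growth f u (Rabs (h 1)) Hs Hu); [apply Rabs_pos_lt; auto|].
  intros k. specialize (Hk k). unfold h in Hk.
  replace (- (1)) with (-1) in Hk by ring. rewrite scale_1 in Hk.
  assert (Hp : 0 < 2^k) by (apply pow_lt; lra).
  assert (E : 2^k * Rabs (f u - f (vscale (-1) u)) = Rabs (f (vscale (2 ^ k) u) - f (vscale (- 2 ^ k) u))).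
  { rewrite Hk, Rabs_mult, (Rabs_pos_eq (2^k)); lra. }
  unfold h; rewrite scale_1; replace (-(1)) with (-1) by ring.
  rewrite E. eapply Rle_trans; [apply Rabs_triang|]. rewrite Rabs_Ropp. lra.
Qed.

Lemma f_quad n (Hn : (2 <= n)%nat) (f : Cvec n -> R) : gen_frame_function f -> sublinear f ->
  forall u, f (vscale 2 u) = 4 * f u.
Proof.
  intros Hf Hs u.
  destruct (Req_dec (N u) 0) as [Z|Z].
  { apply N_zero in Z; subst; rewrite scale_vzero; destruct Hf as [H0 _]; rewrite H0; ring. }
  assert (Hu : 0 < N u) by (pose proof (N_nonneg u); lra).
  destruct (partner n Hn u Hu) as [v Hv].
  pose proof (f_even n Hn f Hf Hs) as Ev.
  assert (Huv : f u = f v).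
  { pose proof (E1 f _ _ Hf (P_scale u v (/2) ltac:(lra) Hv)) as A.
    pose proof (E1 f _ _ Hf (P_scale v u (/2) ltac:(lra) (P_sym _ _ Hv))) as B.
    rewrite !Ev, !scale_scale in A, B.
    replace (2 * / 2) with 1 in A, B by field. rewrite !scale_1 in A, B. lra. }
  pose proof (E1 f _ _ Hf Hv) as A. rewrite Ev in A. lra.
Qed.

Theorem mainTheorem20 (n : nat) (Hn : (2 <= n)%nat) (f : Cvec n -> R) :
  gen_frame_function f -> sublinear f -> forall v : Cvec n, f v = 0.
Proof.
  intros Hf Hs u.
  destruct (Req_dec (N u) 0) as [Z|Z].
  { apply N_zero in Z; subst; apply Hf. }
  assert (Hu : 0 < N u) by (pose proof (N_nonneg u); lra).
  pose proof (f_even n Hn f Hf Hs) as Ev. pose proof (f_quad n Hn f Hf Hs) as Q.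
  assert (Hk : forall k, f (vscale (2^k) u) = 4^k * f u).
  { induction k. simpl; rewrite scale_1; ring.
    simpl. rewrite <- scale_scale, Q, IHk. ring. }
  destruct (Req_dec (f u) 0) as [H0|H0]; auto.
  exfalso. apply (growth f u (Rabs (f u)) Hs Hu); [apply Rabs_pos_lt; auto|].
  intros k. specialize (Hk k).
  replace (vscale (- 2^k) u) with (vscale (-1) (vscale (2^k) u))
    by (rewrite scale_scale; f_equal; ring).
  rewrite Ev, Hk, Rabs_mult, (Rabs_pos_eq (4^k)) by (apply pow_le; lra).
  assert (2^k <= 4^k) by (apply pow_incr; lra).
  pose proof (Rabs_pos (f u)) as Ra. pose proof (Rmult_le_compat_r _ _ _ Ra H). pose proof (pow_le 4 k ltac:(lra)). nra.
Qed.
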